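(* Let $G$ be a group with identity $e$, $A$ a finite set with $|A|\ge2$, $S\subseteq G$ finite with $e\in S$. Let $\mathcal P\subseteq A^S$, and let $f:\mathcal P\to A$ and $g:\mathcal P^c\to A$ be well-behaved functions such that $(\mathcal P,f)$ generates a local map $\mu:A^S\to A$ and $(\mathcal P^c,g)$ generates a local map $\mu':A^S\to A$. (1) An element $s\in S\setminus\{e\}$ is essential for $\mu$ if and only if it is essential for $\mu'$. (2) If $A=\{0,1\}$, then $\mathrm{mms}(\mu)=\mathrm{mms}(\mu')$.
   Context: $A^S$ is the set of functions $S\to A$; $\mathcal P^c=A^S\setminus\mathcal P$. For $s\in S$, $\mathrm{Res}_s(z)=z|_{S\setminus\{s\}}$. An element $s\in S$ is essential for $\mu$ if there exist $z,w\in A^S$ with $\mathrm{Res}_s(z)=\mathrm{Res}_s(w)$ but $\mu(z)\neq\mu(w)$. A pair $(\mathcal Q,h)$ generates $\mu$ if $\mathcal Q=\{z\in A^S:\mu(z)\neq z(e)\}$ and $h:\mathcal Q\to A$ is the restriction of $\mu$ to $\mathcal Q$. A function $h:\mathcal Q\to A$ is well-behaved if for all $p,q\in\mathcal Q$: $p(e)=q(e)$ iff $h(p)=h(q)$. A local map $\nu:A^S\to A$ defines the cellular automaton $\tau:A^G\to A^G$, $\tau(x)(g)=\nu((g^{-1}\cdot x)|_S)$, where $(g\cdot x)(h)=x(g^{-1}h)$; a finite $T\subseteq G$ is a memory set of $\tau$ if some local map $A^T\to A$ defines $\tau$; $\mathrm{mms}(\nu)$ is the intersection of all memory sets of the cellular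 automaton defined by $\nu$, and it equals the set of elements of $S$ essential for $\nu$. *)

(* Defs.v *)
From mathcomp Require Import all_boot.
From Stdlib Require List.

Set Implicit Arguments.
Unset Strict Implicit.
Unset Printing Implicit Defensive.

Record group_str (G : Type) := GroupStr {
  gmul : G -> G -> G;
  ginv : G -> G;
  gone : G;
  gmulA : forall x y z, gmul x (gmul y z) = gmul (gmul x y) z;
  gmul1g : forall x, gmul gone x = x;
  gmulVg : forall x, gmul (ginv x) x = gone }.

Definition finite_subset (G : Type) (T : G -> Prop) : Prop :=
  exists l : list G, forall x, T x <-> List.In x l.

(* A^S : functions S -> A, S seen as the subtype {x | S x}. *)
Definition cfg (G : Type) (S : G -> Prop) (A : Type) := {x : G | S x} -> A.

Definition Res (G : Type) (S : G -> Prop) (A : Type) (s : G) (z : cfg S A)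
  : {x : G | S x /\ x <> s} -> A :=
  fun t => z (exist _ (proj1_sig t) (proj1 (proj2_sig t))).

Definition essential (G : Type) (S : G -> Prop) (A : Type)
  (mu : cfg S A -> A) (s : G) : Prop :=
  exists z w : cfg S A, @Res G S A s z = @Res G S A s w /\ mu z <> mu w.

(* (Q, h) generates mu; eS is the identity element e seen in S. *)
Definition generates (G : Type) (S : G -> Prop) (A : Type) (eS : {x : G | S x})
  (Q : cfg S A -> Prop) (h : {z : cfg S A | Q z} -> A) (mu : cfg S A -> A) : Prop :=
  (forall z, Q z <-> mu z <> z eS) /\ (forall p : {z | Q z}, h p = mu (proj1_sig p)).

Definition well_behaved (G : Type) (S : G -> Prop) (A : Type) (eS : {x : G | S x})
  (Q : cfg S A -> Prop) (h : {z : cfg S A | Q z} -> A) : Prop :=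
  forall p q : {z | Q z}, proj1_sig p eS = proj1_sig q eS <-> h p = h q.

Definition act (G : Type) (Gs : group_str G) (A : Type) (g : G) (x : G -> A) : G -> A :=
  fun h => x (gmul Gs (ginv Gs g) h).

Definition ca_of (G : Type) (Gs : group_str G) (S : G -> Prop) (A : Type)
  (nu : cfg S A -> A) : (G -> A) -> (G -> A) :=
  fun x g => nu (fun s => act Gs (ginv Gs g) x (proj1_sig s)).

Definition memory_set (G : Type) (Gs : group_str G) (A : Type)
  (tau : (G -> A) -> (G -> A)) (T : G -> Prop) : Prop :=
  finite_subset T /\ exists nu' : cfg T A -> A, forall x, tau x = ca_of Gs nu' x.

Definition mms (G : Type) (Gs : group_str G) (S : G -> Prop) (A : Type)
  (nu : cfg S A -> A) : G -> Prop :=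
  fun h => forall T : G -> Prop, memory_set Gs (ca_of Gs nu) T -> T h.

(* Main.v *)
Require Import Defs.
From mathcomp Require Import all_boot.
From Stdlib Require Import Classical FunctionalExtensionality.

Lemma ess_transfer (G : Type) (S : G -> Prop) (A : finType) (eS : {x : G | S x})
  (Q Q' : cfg S A -> Prop) (h : {z | Q z} -> A) (h' : {z | Q' z} -> A)
  (mu mu' : cfg S A -> A) (s : G) :
  well_behaved eS h -> generates eS h mu -> generates eS h' mu' ->
  (forall z, Q' z <-> ~ Q z) ->
  (forall z w, @Res G S A s z = @Res G S A s w -> z eS = w eS) ->
  essential mu s -> essential mu' s.
Proof.
move=> wb [g1 g2] [g1' g2'] hQ hR [z [w [hzw hmu]]].
exists z, w; split => //.
have ezw := hR _ _ hzw.
destruct (classic (Q z)) as [qz|qz]; destruct (classic (Q w)) as [qw|qw].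
- exfalso; apply: hmu.
  rewrite -(g2 (exist _ z qz)) -(g2 (exist _ w qw)).
  by apply/(wb (exist _ z qz) (exist _ w qw)).
- have e1 : mu' z = z eS.
    case: (eqVneq (mu' z) (z eS)) => // /eqP ne.
    by have := proj1 (hQ z) (proj2 (g1' z) ne).
  have e2 : mu' w <> w eS by apply/(g1' w)/hQ.
  by rewrite e1 ezw => E; apply: e2; rewrite E.
- have e1 : mu' w = w eS.
    case: (eqVneq (mu' w) (w eS)) => // /eqP ne.
    by have := proj1 (hQ w) (proj2 (g1' w) ne).
  have e2 : mu' z <> z eS by apply/(g1' z)/hQ.
  by rewrite e1 -ezw => E; apply: e2; rewrite E.
- exfalso; apply: hmu.
  have e1 : mu z = z eS.
    case: (eqVneq (mu z) (z eS)) => // /eqP ne.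
    by have := qz (proj2 (g1 z) ne).
  have e2 : mu w = w eS.
    case: (eqVneq (mu w) (w eS)) => // /eqP ne.
    by have := qw (proj2 (g1 w) ne).
  by rewrite e1 e2 ezw.
Qed.

Arguments ess_transfer {G S A eS Q Q' h h' mu mu' s}.

Lemma card2_uniq (A : finType) (a x y : A) : #|A| = 2 -> x != a -> y != a -> x = y.
Proof.
move=> hA xa ya; apply/eqP; apply/negPn/negP => xy.
have := max_card [predU1 a & pred2 x y].
rewrite cardU1 card2 xy hA inE negb_or eq_sym xa eq_sym ya.
by [].
Qed.

Arguments card2_uniq {A a x y}.

Definition flip (A : finType) (a : A) : A := odflt a [pick b : A | b != a].

Lemma flipE (A : finType) (a b : A) : #|A| = 2 -> b <> a -> @flip A a = b.
Proof.
move=> hA ba; rewrite /flip; case: pickP => [c ca|] /=.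
  by apply: card2_uniq hA ca (introN eqP ba).
by move=> /(_ b) /=; case: eqP.
Qed.

Arguments flipE {A a b}.

Lemma mms_transfer (G : Type) (Gs : group_str G) (S : G -> Prop) (A : finType)
  (mu mu' : cfg S A -> A) (F : A -> A) :
  (forall z, mu z = F (mu' z)) -> forall h, mms Gs mu h -> mms Gs mu' h.
Proof.
move=> hF h hm T [fT [nu hnu]].
apply: hm; split => //.
exists (fun t => F (nu t)) => x.
apply: functional_extensionality => g0.
have := f_equal (fun k => k g0) (hnu x).
move=> E; rewrite /ca_of /=; rewrite /ca_of /= in E. by rewrite hF E.
Qed.

Arguments mms_transfer {G Gs S A mu mu' F}.

Theorem mainTheorem7 (G : Type) (Gs : group_str G) (A : finType)
  (S : G -> Prop) (hA : 1 < #|A|) (hS : finite_subset S) (he : S (gone Gs))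
  (P : cfg S A -> Prop) (f : {z : cfg S A | P z} -> A)
  (g : {z : cfg S A | ~ P z} -> A) (mu mu' : cfg S A -> A) :
  well_behaved (exist S (gone Gs) he) f ->
  well_behaved (exist S (gone Gs) he) g ->
  generates (exist S (gone Gs) he) f mu ->
  generates (exist S (gone Gs) he) g mu' ->
  (forall s : G, S s -> s <> gone Gs -> (essential mu s <-> essential mu' s)) /\
  (#|A| = 2 -> forall h : G, mms Gs mu h <-> mms Gs mu' h).
Proof.
move=> wf wg gf gg; split.
  move=> s Ss ne.
  have hR : forall z w : cfg S A, @Res G S A s z = @Res G S A s w ->
      z (exist S (gone Gs) he) = w (exist S (gone Gs) he).
    move=> z w E.
    have E' := f_equal (fun k => k (exist (fun x => S x /\ x <> s) (gone Gs) (conj he (fun q => ne (esym q))))) E.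
    rewrite /Res /= in E'.
    by rewrite (proof_irrelevance _ he (proj1 (conj he (fun q => ne (esym q))))) E'.
  split.
    apply: (ess_transfer wf gf gg) => // z; tauto.
  apply: (ess_transfer wg gg gf) => // z; split; [tauto|apply: NNPP].
move=> h2.
have neq : forall z, mu z <> mu' z.
  move=> z E; case: gf => g1 _; case: gg => g1' _.
  destruct (classic (P z)) as [pz|pz].
    have := proj1 (g1 z) pz; rewrite E => ne.
    exact: (proj2 (g1' z) ne) pz.
  apply: (pz); apply/(g1 z); rewrite E.
  exact: (proj1 (g1' z) pz).
move=> h; split; apply: (mms_transfer (F:=@flip A)) => z.
  by rewrite (flipE h2 (neq z)).
by rewrite (flipE h2 (fun q => neq z (esym q))).
Qed.
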